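(* Let $\mathcal{Z}$ be a finite set with probability distribution $\{p_z\}_{z\in\mathcal{Z}}$, let $\rho_z$ ($z\in\mathcal{Z}$) be density matrices on a finite-dimensional Hilbert space $\mathcal{H}^Q$, and let $\langle\rho\rangle=\sum_z p_z\rho_z$. For an integer $M\ge1$ define the states on $(\mathbb{C}^{|\mathcal{Z}|}\otimes\mathcal{H}^Q)^{\otimes M}$ $$\rho_{1,M}=\Big(\sum_z p_z|z\rangle\langle z|\otimes\rho_z\Big)^{\otimes M},\qquad \rho_{2,M}=\Big(\sum_z p_z|z\rangle\langle z|\otimes\langle\rho\rangle\Big)^{\otimes M},$$ which represent coherent access to $M$ independent samples from the ensemble $\mathcal{E}_1=\{(p_z,\rho_z)\}$ and from $\mathcal{E}_2=\{(p_z,\langle\rho\rangle)\}$ respectively (labels stored in classical registers, states in quantum registers). Suppose one of the two is given, each with prior probability $1/2$, and a simulation-free strategy, i.e. a two-outcome POVM $\{E_1,E_2=\mathbb{I}-E_1\}$ satisfying $(\pi_\tau^{\otimes M}\otimes\mathbb{I}_Q)E_1(\pi_\tau^{\otimes M}\otimes\mathbb{I}_Q)^\dagger=E_1$ for every permutation $\tau$ of $\mathcal{Z}$, is used to guess which (outcome $j$ means guessing $\mathcal{E}_j$). Then the success probability $p_{\rm succ}=\tfrac12\operatorname{Tr}[E_1\rho_{1,M}]+\tfrac12\operatorname{Tr}[E_2\rho_{2,M}]$ satisfies $$p_{\rm succ}\le\frac12+M^2\sum_{z\in\mathcal{Z}}p_z^2.$$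
   Context: $\pi_\tau$ is the permutation operator on a single classical register $\mathbb{C}^{|\mathcal{Z}|}$ with $\pi_\tau|z\rangle=|\tau(z)\rangle$, acting on each of the $M$ classical registers, and $\mathbb{I}_Q$ is the identity on all $M$ quantum registers. The POVM may be an arbitrary joint measurement on all $M$ classical and quantum registers (including entangled, adaptive or stochastic strategies); ''simulation-free'' means the strategy treats all labels $z$ symmetrically, as encoded by the permutation-invariance condition. *)

(* Defs.v *)
(* Operators on a finite-dimensional Hilbert space with
   orthonormal basis indexed by a finType T are represented by their matrix
   entries A : T -> T -> C, over an arbitrary numeric closed field C
   (e.g. the complex numbers). *)
From mathcomp Require Import all_boot all_order all_algebra.
From mathcomp Require Import fingroup perm.
Set Implicit Arguments. Unset Strict Implicit. Unset Printing Implicit Defensive.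
Import Order.TTheory GRing.Theory Num.Theory.
Local Open Scope ring_scope.

Definition op (C : numClosedFieldType) (T : finType) := T -> T -> C.

Definition psd {C : numClosedFieldType} {T : finType} (A : op C T) : Prop :=
  (forall x y, A y x = (A x y)^*) /\
  (forall v : T -> C, 0 <= \sum_x \sum_y (v x)^* * A x y * v y).

Definition opmul {C : numClosedFieldType} {T : finType} (A B : op C T) : op C T :=
  fun x y => \sum_k A x k * B k y.
Definition opadj {C : numClosedFieldType} {T : finType} (A : op C T) : op C T :=
  fun x y => (A y x)^*.
Definition opid {C : numClosedFieldType} {T : finType} : op C T :=
  fun x y => (x == y)%:R.
Definition opsub {C : numClosedFieldType} {T : finType} (A B : op C T) : op C T :=
  fun x y => A x y - B x y.
Definition optr {C : numClosedFieldType} {T : finType} (A : op C T) : C :=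
  \sum_x A x x.

Definition is_density {C : numClosedFieldType} {d : nat} (r : 'M[C]_d) : Prop :=
  psd (fun i j : 'I_d => r i j) /\ \tr r = 1.

Definition is_distribution {C : numClosedFieldType} {Z : finType} (p : Z -> C) : Prop :=
  (forall z, 0 <= p z) /\ \sum_z p z = 1.

Definition avg_state {C : numClosedFieldType} {Z : finType} {d : nat}
  (p : Z -> C) (rho : Z -> 'M[C]_d) : 'M[C]_d := \sum_z p z *: rho z.

(* one register C^{|Z|} (x) H^Q, basis indexed by Z * 'I_d;
   cq state sum_z p_z |z><z| (x) sigma_z *)
Definition cq_state {C : numClosedFieldType} {Z : finType} {d : nat}
  (p : Z -> C) (sigma : Z -> 'M[C]_d) : op C (Z * 'I_d)%type :=
  fun a b => (a.1 == b.1)%:R * p a.1 * sigma a.1 a.2 b.2.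

(* M-fold tensor power: basis of (C^{|Z|} (x) H^Q)^{(x) M} indexed by M-tuples *)
Definition regs (M : nat) (U : finType) : finType := {ffun 'I_M -> U}.

Definition tens_pow {C : numClosedFieldType} {U : finType} (M : nat) (A : op C U)
  : op C (regs M U) :=
  fun x y => \prod_(k < M) A (x k) (y k).

(* basis map of pi_tau^{(x)M} (x) I_Q: relabel every classical register by tau *)
Definition perm_regs {Z : finType} {d M : nat} (tau : {perm Z})
  (x : regs M (Z * 'I_d)%type) : regs M (Z * 'I_d)%type :=
  [ffun k => (tau (x k).1, (x k).2)].

Definition perm_op {C : numClosedFieldType} {Z : finType} {d M : nat} (tau : {perm Z})
  : op C (regs M (Z * 'I_d)%type) :=
  fun x y => (x == perm_regs tau y)%:R.

Definition simulation_free {C : numClosedFieldType} {Z : finType} {d M : nat}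
  (E1 : op C (regs M (Z * 'I_d)%type)) : Prop :=
  forall tau : {perm Z}, forall x y,
    opmul (opmul (perm_op tau) E1) (opadj (perm_op tau)) x y = E1 x y.

Arguments tens_pow {C U} M A _ _.

(* Main.v *)
Require Import Defs.
From mathcomp Require Import all_boot all_order all_algebra.
From mathcomp Require Import fingroup perm.
From mathcomp Require Import ring.
Set Implicit Arguments. Unset Strict Implicit. Unset Printing Implicit Defensive.
Import Order.TTheory GRing.Theory Num.Theory.
Local Open Scope ring_scope.

Lemma psd_decomp (C : numClosedFieldType) (n : nat) (A : 'M[C]_n) :
  psd (fun i j : 'I_n => A i j) ->
    (forall j, 0 <= spectral_diag A 0 j) /\ forall a b, A a b =
     \sum_j spectral_diag A 0 j * (spectralmx A j a)^* * ((spectralmx A j b)^*)^*.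
Proof.
move=> [herm qf].
have AtA : (A ^t* = A)%sesqui.
  by apply/matrixP => i j; rewrite !mxE herm conjCK.
have An : A \is normalmx by apply/normalmxP; rewrite AtA.
have := orthomx_spectralP An.
set P := spectralmx A; set D := spectral_diag A => Aeq.
have Pu : P \is unitarymx := spectral_unitarymx A.
rewrite invmx_unitary // in Aeq.
have PPt : forall j k, \sum_(x < n) P j x * (P k x)^* = (j == k)%:R.
  move=> j k; move/unitarymxP: Pu => /matrixP /(_ j k).
  by rewrite !mxE => <-; apply: eq_bigr => x _; rewrite !mxE.
have Aent : forall a b, A a b = \sum_k (P k a)^* * D 0 k * P k b.
  move=> a b; rewrite {1}Aeq mul_mx_diag !mxE; apply: eq_bigr => k _.
  by rewrite !mxE.
split; last first.
  by move=> a b; rewrite Aent; apply: eq_bigr => k _ /=; rewrite conjCK; ring.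
move=> j; have qfj : \sum_x \sum_y ((P j x)^*)^* * A x y * (P j y)^* = D 0 j.
  transitivity (\sum_k D 0 k * ((\sum_x P j x * (P k x)^*) * (\sum_y P k y * (P j y)^*))).
    transitivity (\sum_x \sum_y \sum_k P j x * (P k x)^* * D 0 k * P k y * (P j y)^*).
      apply: eq_bigr => x _; apply: eq_bigr => y _; rewrite conjCK Aent.
      rewrite mulr_sumr mulr_suml; apply: eq_bigr => k _; ring.
    rewrite [RHS](_ : _ = \sum_k \sum_x \sum_y D 0 k * (P j x * (P k x)^*) * (P k y * (P j y)^*)).
      rewrite [RHS]exchange_big; apply: eq_bigr => x _; rewrite [RHS]exchange_big; apply: eq_bigr => y _.
      by apply: eq_bigr => k _; ring.
    apply: eq_bigr => k _; rewrite mulr_suml mulr_sumr; apply: eq_bigr => x _.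
    by rewrite mulrA mulr_sumr.
  rewrite (bigD1 j) //= (PPt j j) eqxx big1 ?addr0.
  by rewrite /= mulr1n !mulr1.
  by move=> k nkj; rewrite (PPt j k) (PPt k j) eq_sym (negbTE nkj) mulr0 mulr0.

by move: (qf (fun x => (P j x)^*)); rewrite qfj.
Qed.
Lemma sum_delta (C : numClosedFieldType) (X : finType) (x : X) (F : X -> C) :
  \sum_y (x == y)%:R * F y = F x.
Proof.
rewrite (bigD1 x) //= eqxx mul1r big1 ?addr0 // => y nxy.
by rewrite eq_sym (negbTE nxy) mul0r.
Qed.

Lemma qf_sub (C : numClosedFieldType) (X : finType) (E : op C X) (v : X -> C) :
  \sum_x \sum_y (v x)^* * opsub opid E x y * v y =
  \sum_x v x * (v x)^* - \sum_x \sum_y (v x)^* * E x y * v y.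
Proof.
rewrite -sumrB; apply: eq_bigr => x _.
rewrite /opsub /opid.
transitivity (\sum_y ((x == y)%:R * ((v x)^* * v y)) - \sum_y (v x)^* * E x y * v y).
  by rewrite -sumrB; apply: eq_bigr => y _; ring.
by rewrite sum_delta mulrC.
Qed.

Lemma tr_bound (C : numClosedFieldType) (X J : finType) (E : op C X)
  (lam : J -> C) (U : J -> X -> C) :
  psd E -> psd (opsub opid E) -> (forall j, 0 <= lam j) ->
  0 <= \sum_x \sum_y E x y * (\sum_j lam j * U j y * (U j x)^*) /\
  \sum_x \sum_y E x y * (\sum_j lam j * U j y * (U j x)^*)
    <= \sum_x \sum_j lam j * U j x * (U j x)^*.
Proof.
move=> [_ qE] [_ qIE] lam0.
have key : \sum_x \sum_y E x y * (\sum_j lam j * U j y * (U j x)^*) =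
   \sum_j lam j * \sum_x \sum_y (U j x)^* * E x y * U j y.
  transitivity (\sum_x \sum_y \sum_j lam j * ((U j x)^* * E x y * U j y)).
    apply: eq_bigr => x _; apply: eq_bigr => y _; rewrite mulr_sumr.
    by apply: eq_bigr => j _; ring.
  symmetry; transitivity (\sum_j \sum_x \sum_y lam j * ((U j x)^* * E x y * U j y)).
    apply: eq_bigr => j _; rewrite mulr_sumr; apply: eq_bigr => x _.
    by rewrite mulr_sumr.
  rewrite exchange_big /=; apply: eq_bigr => x _.
  by rewrite exchange_big.
have key2 : \sum_x \sum_j lam j * U j x * (U j x)^* =
   \sum_j lam j * \sum_x U j x * (U j x)^*.
  rewrite exchange_big /=; apply: eq_bigr => j _; rewrite mulr_sumr.
  by apply: eq_bigr => x _; rewrite mulrA.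
rewrite key key2; split.
  by apply: sumr_ge0 => j _; apply: mulr_ge0.
apply: ler_sum => j _; apply: ler_wpM2l => //.
have := qIE (U j); rewrite qf_sub subr_ge0.
done.
Qed.

Lemma tr_bound' (C : numClosedFieldType) (X J : finType) (E : op C X)
  (sig : X -> X -> C) (lam : J -> C) (U : J -> X -> C) :
  psd E -> psd (opsub opid E) -> (forall j, 0 <= lam j) ->
  (forall y x, sig y x = \sum_j lam j * U j y * (U j x)^*) ->
  0 <= \sum_x \sum_y E x y * sig y x /\
  \sum_x \sum_y E x y * sig y x <= \sum_x sig x x.
Proof.
move=> pE pIE l0 hs.
have := tr_bound U pE pIE l0.
have -> : \sum_x \sum_y E x y * sig y x =
  \sum_x \sum_y E x y * (\sum_j lam j * U j y * (U j x)^*).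
  by apply: eq_bigr => x _; apply: eq_bigr => y _; rewrite hs.
have -> : \sum_x sig x x = \sum_x \sum_j lam j * U j x * (U j x)^*.
  by apply: eq_bigr => x _; rewrite hs.
done.
Qed.

Lemma prod_eq_ind (C : numClosedFieldType) (I : finType) (T : eqType)
  (a b : {ffun I -> T}) :
  \prod_k (a k == b k)%:R = (a == b)%:R :> C.
Proof.
case: (eqVneq a b) => [->|nab].
  by rewrite big1 // => k _; rewrite eqxx.
have : ~~ [forall k, a k == b k].
  apply: contra nab => /forallP H; apply/eqP/ffunP => k; exact/eqP.
rewrite negb_forall => /existsP [k nk].
by rewrite (bigD1 k) //= (negbTE nk) mul0r.
Qed.

Definition lab (Z : finType) (d M : nat) (x : regs M (Z * 'I_d)%type)
  : {ffun 'I_M -> Z} := [ffun k => (x k).1].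

Definition Pw (C : numClosedFieldType) (Z : finType) (M : nat) (p : Z -> C)
  (w : {ffun 'I_M -> Z}) : C := \prod_k p (w k).

Definition rt (C : numClosedFieldType) (Z : finType) (d M : nat)
  (rho : Z -> 'M[C]_d) (u : {ffun 'I_M -> Z}) (y x : regs M (Z * 'I_d)%type) : C :=
  \prod_k rho (u k) (y k).2 (x k).2.

Definition sig (C : numClosedFieldType) (Z : finType) (d M : nat)
  (rho : Z -> 'M[C]_d) (w u : {ffun 'I_M -> Z}) (y x : regs M (Z * 'I_d)%type) : C :=
  ((lab y == w) && (lab x == w))%:R * rt rho u y x.

Definition tt (C : numClosedFieldType) (Z : finType) (d M : nat)
  (E1 : op C (regs M (Z * 'I_d)%type))
  (rho : Z -> 'M[C]_d) (w u : {ffun 'I_M -> Z}) : C :=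
  \sum_x \sum_y E1 x y * sig rho w u y x.

Lemma tens_cq (C : numClosedFieldType) (Z : finType) (d M : nat)
  (p : Z -> C) (sigma : Z -> 'M[C]_d) (y x : regs M (Z * 'I_d)%type) :
  tens_pow M (cq_state p sigma) y x =
  (lab y == lab x)%:R * Pw p (lab y) * \prod_k sigma (lab y k) (y k).2 (x k).2.
Proof.
rewrite /tens_pow /cq_state big_split big_split /= -(prod_eq_ind C (lab y) (lab x)).
by rewrite /Pw; congr (_ * _ * _); apply: eq_bigr => k _; rewrite !ffunE.
Qed.

Lemma rho1_eq (C : numClosedFieldType) (Z : finType) (d M : nat)
  (p : Z -> C) (rho : Z -> 'M[C]_d) (y x : regs M (Z * 'I_d)%type) :
  tens_pow M (cq_state p rho) y x = \sum_w Pw p w * sig rho w w y x.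
Proof.
rewrite tens_cq (bigD1 (lab y)) //= [X in _ + X]big1 ?addr0.
  by rewrite /sig eqxx /= eq_sym /rt; ring.
by move=> w nw; rewrite /sig eq_sym (negbTE nw) /= mul0r mulr0.
Qed.

Lemma avg_entry (C : numClosedFieldType) (Z : finType) (d : nat)
  (p : Z -> C) (rho : Z -> 'M[C]_d) a b :
  avg_state p rho a b = \sum_z p z * rho z a b.
Proof. by rewrite /avg_state summxE; apply: eq_bigr => z _; rewrite mxE. Qed.

Lemma rho2_eq (C : numClosedFieldType) (Z : finType) (d M : nat)
  (p : Z -> C) (rho : Z -> 'M[C]_d) (y x : regs M (Z * 'I_d)%type) :
  tens_pow M (cq_state p (fun _ => avg_state p rho)) y x =
  \sum_w \sum_u Pw p w * Pw p u * sig rho w u y x.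
Proof.
rewrite tens_cq.
have -> : \prod_k avg_state p rho (y k).2 (x k).2 = \sum_u Pw p u * rt rho u y x.
  transitivity (\prod_k \sum_z p z * rho z (y k).2 (x k).2).
    by apply: eq_bigr => k _; rewrite avg_entry.
  rewrite bigA_distr_bigA /=; apply: eq_bigr => u _.
  by rewrite /Pw /rt -big_split.
rewrite [RHS](bigD1 (lab y)) //= [X in _ + X]big1 ?addr0.
  rewrite mulr_sumr; apply: eq_bigr => u _.
  by rewrite /sig eqxx /= eq_sym; ring.
move=> w nw; apply: big1 => u _.
by rewrite /sig eq_sym (negbTE nw) /= mul0r mulr0.
Qed.

Lemma sum_prod_ffun (C : numClosedFieldType) (I U : finType)
  (F : I -> U -> C) :
  \sum_(x : {ffun I -> U}) \prod_k F k (x k) = \prod_k \sum_c F k c.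
Proof. by rewrite bigA_distr_bigA. Qed.

Lemma trace1 (C : numClosedFieldType) (d : nat) (r : 'M[C]_d) :
  is_density r -> \sum_a r a a = 1.
Proof. by move=> [_ <-]; rewrite /mxtrace. Qed.

Lemma sig_tr (C : numClosedFieldType) (Z : finType) (d M : nat)
  (rho : Z -> 'M[C]_d) (w u : {ffun 'I_M -> Z}) :
  (forall z, is_density (rho z)) ->
  \sum_x sig rho w u x x = 1.
Proof.
move=> dens.
transitivity (\sum_(x : {ffun 'I_M -> Z * 'I_d})
   \prod_k (((x k).1 == w k)%:R * rho (u k) (x k).2 (x k).2)).
  apply: eq_bigr => x _; rewrite /sig andbb -(prod_eq_ind C (lab x) w) /rt -big_split.
  by apply: eq_bigr => k _; rewrite ffunE.
rewrite (sum_prod_ffun (fun k (c : Z * 'I_d) => (c.1 == w k)%:R * rho (u k) c.2 c.2)) big1 // => k _.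
rewrite -(pair_bigA _ (fun z a => (z == w k)%:R * rho (u k) a a)) /=.
transitivity (\sum_z (w k == z)%:R * \sum_a rho (u k) a a).
  by apply: eq_bigr => z _; rewrite mulr_sumr eq_sym.
by rewrite sum_delta trace1.
Qed.

Lemma avg_density (C : numClosedFieldType) (Z : finType) (d : nat)
  (p : Z -> C) (rho : Z -> 'M[C]_d) :
  is_distribution p -> (forall z, is_density (rho z)) ->
  \sum_a avg_state p rho a a = 1.
Proof.
move=> [_ p1] dens.
transitivity (\sum_z p z * \sum_a rho z a a).
  under eq_bigr => a _ do rewrite avg_entry.
  rewrite exchange_big /=; apply: eq_bigr => z _; by rewrite mulr_sumr.
by rewrite -p1; apply: eq_bigr => z _; rewrite trace1 ?mulr1.
Qed.

Lemma rho2_tr (C : numClosedFieldType) (Z : finType) (d M : nat)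
  (p : Z -> C) (rho : Z -> 'M[C]_d) :
  is_distribution p -> (forall z, is_density (rho z)) ->
  \sum_x tens_pow M (cq_state p (fun _ => avg_state p rho)) x x = 1.
Proof.
move=> dp dens; rewrite /tens_pow (sum_prod_ffun (fun k (c : Z * 'I_d) => cq_state p (fun _ => avg_state p rho) c c)) big1 // => k _.
rewrite /cq_state.
rewrite -(pair_bigA _ (fun z a => ((z,a).1 == (z,a).1)%:R * p (z,a).1 * avg_state p rho (z,a).2 (z,a).2)) /=.
transitivity (\sum_z p z * \sum_a avg_state p rho a a).
  by apply: eq_bigr => z _; rewrite mulr_sumr; apply: eq_bigr => a _; rewrite eqxx mul1r.
by rewrite (avg_density dp dens); under eq_bigr do rewrite mulr1; case: dp.
Qed.

Lemma tt_bound (C : numClosedFieldType) (Z : finType) (d M : nat)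
  (E1 : op C (regs M (Z * 'I_d)%type))
  (rho : Z -> 'M[C]_d) (w u : {ffun 'I_M -> Z}) :
  (forall z, is_density (rho z)) -> psd E1 -> psd (opsub opid E1) ->
  0 <= tt E1 rho w u /\ tt E1 rho w u <= 1.
Proof.
move=> dens pE pIE.
pose D z := spectral_diag (rho z); pose P z := spectralmx (rho z).
have dec : forall z, (forall j, 0 <= D z 0 j) /\ forall a b, rho z a b =
     \sum_j D z 0 j * (P z j a)^* * ((P z j b)^*)^*.
  by move=> z; apply: psd_decomp; case: (dens z).
pose lam (J : {ffun 'I_M -> 'I_d}) := \prod_k D (u k) 0 (J k).
pose U (J : {ffun 'I_M -> 'I_d}) (y : regs M (Z * 'I_d)%type) :=
  (lab y == w)%:R * \prod_k (P (u k) (J k) (y k).2)^*.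
have [] := @tr_bound' C _ _ E1 (sig rho w u) lam U pE pIE.
- by move=> J; apply: prodr_ge0 => k _; case: (dec (u k)).
- move=> y x; rewrite /sig /rt.
  transitivity (((lab y == w) && (lab x == w))%:R *
     \prod_k \sum_j D (u k) 0 j * (P (u k) j (y k).2)^* * ((P (u k) j (x k).2)^*)^*).
    by congr (_ * _); apply: eq_bigr => k _; case: (dec (u k)) => _ ->.
  rewrite bigA_distr_bigA /= mulr_sumr; apply: eq_bigr => J _.
  rewrite /U /lam rmorphM /= conjC_nat rmorph_prod !big_split /=.
  by case: (lab y == w); case: (lab x == w); rewrite /= ?mul0r ?mulr0 ?mul1r ?mulr1 //; ring.
- by move=> h0 h1; rewrite /tt; split => //; rewrite -(@sig_tr _ _ _ _ rho w u dens).
Qed.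

Lemma perm_regs_inj (Z : finType) (d M : nat) (tau : {perm Z}) :
  injective (@perm_regs Z d M tau).
Proof.
move=> a b /ffunP H; apply/ffunP => k; have := H k; rewrite !ffunE.
case: (a k) => a1 a2; case: (b k) => b1 b2 /= [/perm_inj -> ->] //.
Qed.

Lemma E1_inv (C : numClosedFieldType) (Z : finType) (d M : nat)
  (E1 : op C (regs M (Z * 'I_d)%type)) :
  simulation_free E1 -> forall tau l k,
  E1 (perm_regs tau l) (perm_regs tau k) = E1 l k.
Proof.
move=> H tau l k; rewrite -[LHS](H tau) /opmul /opadj /perm_op.
transitivity (\sum_k0 (k == k0)%:R * (\sum_l0 (l == l0)%:R * E1 l0 k0)).
  apply: eq_bigr => k0 _; rewrite (inj_eq (@perm_regs_inj Z d M tau)) conjC_nat mulrC.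
  by congr (_ * _); apply: eq_bigr => l0 _; rewrite (inj_eq (@perm_regs_inj Z d M tau)).
rewrite (sum_delta k (fun k0 => \sum_l0 (l == l0)%:R * E1 l0 k0)).
exact: sum_delta.
Qed.

Lemma lab_perm_eq (Z : finType) (d M : nat) (tau : {perm Z})
  (v w : {ffun 'I_M -> Z}) (y : regs M (Z * 'I_d)%type) :
  (forall k, tau (v k) = w k) ->
  (lab (perm_regs tau y) == w) = (lab y == v).
Proof.
move=> hv; apply/eqP/eqP => [/ffunP H|hy].
  apply/ffunP => k; have := H k; rewrite !ffunE -hv /=; exact: perm_inj.
by apply/ffunP => k; rewrite !ffunE /= -hv -hy ffunE.
Qed.

Lemma tt_inv (C : numClosedFieldType) (Z : finType) (d M : nat)
  (E1 : op C (regs M (Z * 'I_d)%type)) (rho : Z -> 'M[C]_d)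
  (tau : {perm Z}) (v w u : {ffun 'I_M -> Z}) :
  simulation_free E1 -> (forall k, tau (v k) = w k) ->
  tt E1 rho w u = tt E1 rho v u.
Proof.
move=> H hv; rewrite /tt (reindex_inj (@perm_regs_inj Z d M tau)).
apply: eq_bigr => x _; rewrite (reindex_inj (@perm_regs_inj Z d M tau)).
apply: eq_bigr => y _; rewrite E1_inv //; congr (_ * _).
rewrite /sig !(lab_perm_eq _ hv); congr (_ * _).
by rewrite /rt; apply: eq_bigr => k _; rewrite !ffunE.
Qed.

Lemma ext_perm (T : finType) (s t : seq T) :
  uniq s -> uniq t -> size s = size t -> exists tau : {perm T}, map tau s = t.
Proof.
elim: s t => [|x s IH] [|y t] //=.
  by move=> _ _ _; exists 1%g.
move=> /andP [xs us] /andP [yt ut] [sz].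
have [tau' htau] := IH t us ut sz.
exists (tau' * tperm (tau' x) y)%g.
rewrite permM tpermL; congr (_ :: _).
rewrite -[RHS]htau; apply/eq_in_map => z zs; rewrite permM tpermD //.
  by rewrite (inj_eq perm_inj); apply: contraNneq xs => ->.
by apply: contraNneq yt => ->; rewrite -htau map_f.
Qed.

Lemma inj_perm (Z : finType) (M : nat) (v w : {ffun 'I_M -> Z}) :
  injectiveb v -> injectiveb w -> exists tau : {perm Z}, forall k, tau (v k) = w k.
Proof.
move=> /injectiveP iv /injectiveP iw.
have u1 : uniq [seq v k | k <- enum 'I_M] by rewrite (map_inj_uniq iv) enum_uniq.
have u2 : uniq [seq w k | k <- enum 'I_M] by rewrite (map_inj_uniq iw) enum_uniq.
have [tau ht] := ext_perm u1 u2 (etrans (size_map _ _) (esym (size_map _ _))).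
exists tau => k; move: ht; rewrite -map_comp => /eq_in_map /(_ k).
by rewrite mem_enum => /(_ isT).
Qed.

Lemma Pw_sum (C : numClosedFieldType) (Z : finType) (M : nat) (p : Z -> C) :
  is_distribution p -> \sum_(u : {ffun 'I_M -> Z}) Pw p u = 1.
Proof.
move=> [_ p1]; rewrite /Pw (sum_prod_ffun (fun (k : 'I_M) (z : Z) => p z)).
by rewrite big1 // => k _; rewrite p1.
Qed.

Lemma Pw_ge0 (C : numClosedFieldType) (Z : finType) (M : nat) (p : Z -> C)
  (w : {ffun 'I_M -> Z}) : is_distribution p -> 0 <= Pw p w.
Proof. by move=> [p0 _]; apply: prodr_ge0 => k _. Qed.

Lemma prod_two (C : numClosedFieldType) (M : nat) (F : 'I_M -> C) (i j : 'I_M) :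
  j != i -> (forall k, k != i -> k != j -> F k = 1) -> \prod_k F k = F i * F j.
Proof.
move=> nji H; rewrite (bigD1 i) //= (bigD1 j nji) /= big1 ?mulr1 //.
by move=> k /andP [ki kj]; apply: H.
Qed.

Lemma marg (C : numClosedFieldType) (Z : finType) (M : nat) (p : Z -> C)
  (i j : 'I_M) : is_distribution p -> i != j ->
  \sum_(w : {ffun 'I_M -> Z}) (w i == w j)%:R * Pw p w = \sum_z p z ^+ 2.
Proof.
move=> dp nij; have nji : j != i by rewrite eq_sym.
pose G (z : Z) (k : 'I_M) (c : Z) :=
  p c * (if k == i then (c == z)%:R else if k == j then (c == z)%:R else 1).
transitivity (\sum_z \sum_(w : {ffun 'I_M -> Z}) \prod_k G z k (w k)).
  rewrite exchange_big /=; apply: eq_bigr => w _.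
  transitivity (\sum_z (w i == z)%:R * ((w j == z)%:R * Pw p w)).
    by rewrite (sum_delta (w i) (fun z => (w j == z)%:R * Pw p w)) eq_sym.
  apply: eq_bigr => z _; rewrite /G big_split /= /Pw.
  have -> : \prod_k (if k == i then (w k == z)%:R else if k == j then (w k == z)%:R else 1)
     = (w i == z)%:R * (w j == z)%:R :> C.
    rewrite (prod_two nji); first by rewrite eqxx (negbTE nji) eqxx.
    by move=> k /negbTE -> /negbTE ->.
  by ring.
apply: eq_bigr => z _; rewrite (sum_prod_ffun (G z)).
rewrite (prod_two nji).
  have e : \sum_c p c * (c == z)%:R = p z.
    by rewrite -(sum_delta z p); apply: eq_bigr => c _; rewrite mulrC eq_sym.
  by rewrite /G eqxx (negbTE nji) eqxx e expr2.
move=> k /negbTE ki /negbTE kj; rewrite /G ki kj.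
by case: dp => _ p1; under eq_bigr do rewrite mulr1; exact: p1.
Qed.

Lemma le_sum1 (C : numClosedFieldType) (I : finType) (F : I -> C) (i : I) :
  (forall k, 0 <= F k) -> F i <= \sum_k F k.
Proof.
move=> F0; rewrite (bigD1 i) //= lerDl; exact: sumr_ge0.
Qed.

Lemma noninj_le (C : numClosedFieldType) (Z : finType) (M : nat)
  (w : {ffun 'I_M -> Z}) :
  (~~ injectiveb w)%:R <= \sum_i \sum_j ((i != j) && (w i == w j))%:R :> C.
Proof.
have g0 : forall i, 0 <= \sum_j ((i != j) && (w i == w j))%:R :> C.
  by move=> i; apply: sumr_ge0 => j _; exact: ler0n.
case E: (injectiveb w) => /=; first by apply: sumr_ge0.
case: (boolP [exists i, exists j, (i != j) && (w i == w j)]).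
  move=> /existsP [i /existsP [j hij]].
  rewrite (bigD1 i) //= (bigD1 j) //= hij -addrA lerDl.
  apply: addr_ge0; apply: sumr_ge0 => k _; last exact: g0.
  exact: ler0n.
move=> H; exfalso; move/negbT: E => /negP; apply; apply/injectiveP => a b eab.
apply/eqP; apply: contraNT H => nab; apply/existsP; exists a; apply/existsP; exists b.
by rewrite nab eab eqxx.
Qed.

Lemma N_bound (C : numClosedFieldType) (Z : finType) (M : nat) (p : Z -> C) :
  is_distribution p ->
  \sum_(w : {ffun 'I_M -> Z}) (~~ injectiveb w)%:R * Pw p w
    <= M%:R ^+ 2 * \sum_z p z ^+ 2.
Proof.
move=> dp; have S0 : 0 <= \sum_z p z ^+ 2.
  by apply: sumr_ge0 => z _; case: dp => p0 _; apply: exprn_ge0.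
have h1 : \sum_(w : {ffun 'I_M -> Z}) (~~ injectiveb w)%:R * Pw p w <=
   \sum_(w : {ffun 'I_M -> Z}) (\sum_(i : 'I_M) \sum_(j : 'I_M) ((i != j) && (w i == w j))%:R) * Pw p w.
  apply: ler_sum => w _; apply: ler_wpM2r; first exact: Pw_ge0.
  exact: noninj_le.
apply: (le_trans h1).
have e : \sum_(w : {ffun 'I_M -> Z}) (\sum_(i : 'I_M) \sum_(j : 'I_M) ((i != j) && (w i == w j))%:R) * Pw p w
   = \sum_(i : 'I_M) \sum_(j : 'I_M) \sum_(w : {ffun 'I_M -> Z}) ((i != j) && (w i == w j))%:R * Pw p w.
  transitivity (\sum_(w : {ffun 'I_M -> Z}) \sum_(i : 'I_M) \sum_(j : 'I_M) ((i != j) && (w i == w j))%:R * Pw p w).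
    apply: eq_bigr => w _; rewrite mulr_suml; apply: eq_bigr => i _; exact: mulr_suml.
  rewrite exchange_big; apply: eq_bigr => i _; exact: exchange_big.
rewrite e.
have h2 : \sum_(i : 'I_M) \sum_(j : 'I_M) \sum_(w : {ffun 'I_M -> Z}) ((i != j) && (w i == w j))%:R * Pw p w
   <= \sum_(i : 'I_M) \sum_(j : 'I_M) \sum_z p z ^+ 2.
  apply: ler_sum => i _; apply: ler_sum => j _.
  case: (eqVneq i j) => [->|nij] /=.
    by rewrite big1 // => w _; rewrite mul0r.
  by rewrite (marg dp nij).
apply: (le_trans h2).
by rewrite !big_const_ord !iter_addr_0 -mulrnA -natrX mulr_natl mulnn.
Qed.

Lemma lin_tr (C : numClosedFieldType) (X I : finType) (E : op C X)
  (c : I -> C) (G : I -> X -> X -> C) :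
  \sum_x \sum_y E x y * (\sum_i c i * G i y x) =
  \sum_i c i * \sum_x \sum_y E x y * G i y x.
Proof.
transitivity (\sum_x \sum_y \sum_i c i * (E x y * G i y x)).
  apply: eq_bigr => x _; apply: eq_bigr => y _; rewrite mulr_sumr.
  by apply: eq_bigr => i _; ring.
symmetry; transitivity (\sum_i \sum_x \sum_y c i * (E x y * G i y x)).
  apply: eq_bigr => i _; rewrite mulr_sumr; apply: eq_bigr => x _.
  by rewrite mulr_sumr.
rewrite exchange_big /=; apply: eq_bigr => x _.
by rewrite exchange_big.
Qed.

Lemma T1_eq (C : numClosedFieldType) (Z : finType) (d M : nat)
  (p : Z -> C) (rho : Z -> 'M[C]_d) (E1 : op C (regs M (Z * 'I_d)%type)) :
  optr (opmul E1 (tens_pow M (cq_state p rho))) = \sum_w Pw p w * tt E1 rho w w.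
Proof.
rewrite /optr /opmul.
transitivity (\sum_x \sum_y E1 x y * (\sum_w Pw p w * sig rho w w y x)).
  by apply: eq_bigr => x _; apply: eq_bigr => y _; rewrite rho1_eq.
by rewrite lin_tr.
Qed.

Lemma T2_eq (C : numClosedFieldType) (Z : finType) (d M : nat)
  (p : Z -> C) (rho : Z -> 'M[C]_d) (E1 : op C (regs M (Z * 'I_d)%type)) :
  optr (opmul E1 (tens_pow M (cq_state p (fun _ => avg_state p rho)))) =
  \sum_w \sum_u Pw p w * Pw p u * tt E1 rho w u.
Proof.
rewrite /optr /opmul.
transitivity (\sum_x \sum_y E1 x y *
   (\sum_w Pw p w * (\sum_u Pw p u * sig rho w u y x))).
  apply: eq_bigr => x _; apply: eq_bigr => y _; rewrite rho2_eq.
  congr (_ * _); apply: eq_bigr => w _; rewrite mulr_sumr.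
  by apply: eq_bigr => u _; rewrite mulrA.
rewrite lin_tr; apply: eq_bigr => w _.
rewrite (lin_tr E1 (fun u => Pw p u) (fun u y x => sig rho w u y x)) mulr_sumr.
by apply: eq_bigr => u _; rewrite mulrA.
Qed.

Lemma T2c_eq (C : numClosedFieldType) (Z : finType) (d M : nat)
  (p : Z -> C) (rho : Z -> 'M[C]_d) (E1 : op C (regs M (Z * 'I_d)%type)) :
  is_distribution p -> (forall z, is_density (rho z)) ->
  optr (opmul (opsub opid E1) (tens_pow M (cq_state p (fun _ => avg_state p rho)))) =
  1 - optr (opmul E1 (tens_pow M (cq_state p (fun _ => avg_state p rho)))).
Proof.
move=> dp dens; rewrite -(rho2_tr M dp dens) /optr /opmul -sumrB.
apply: eq_bigr => x _; rewrite /opsub /opid.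
transitivity (\sum_k ((x == k)%:R * tens_pow M (cq_state p (fun _ => avg_state p rho)) k x)
   - \sum_k E1 x k * tens_pow M (cq_state p (fun _ => avg_state p rho)) k x).
  by rewrite -sumrB; apply: eq_bigr => k _; rewrite mulrBl.
by rewrite sum_delta.
Qed.

Lemma delta_bound (C : numClosedFieldType) (Z : finType) (M : nat)
  (p : Z -> C) (t : {ffun 'I_M -> Z} -> {ffun 'I_M -> Z} -> C) :
  is_distribution p ->
  (forall w u, 0 <= t w u /\ t w u <= 1) ->
  (forall w u : {ffun 'I_M -> Z}, injectiveb w -> injectiveb u -> t w u = t u u) ->
  \sum_w \sum_u Pw p w * Pw p u * (t w w - t w u)
    <= 2%:R * (M%:R ^+ 2 * \sum_z p z ^+ 2).
Proof.
move=> dp tb tinv.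
pose b (w u : {ffun 'I_M -> Z}) := injectiveb w && injectiveb u.
pose nI (w : {ffun 'I_M -> Z}) : C := (~~ injectiveb w)%:R.
pose F (w u : {ffun 'I_M -> Z}) := (b w u)%:R * (Pw p w * Pw p u) * t w w.
have h1 : \sum_w \sum_u Pw p w * Pw p u * (t w w - t w u) <=
   \sum_w \sum_u ((F w u - F u w) + (nI w + nI u) * (Pw p w * Pw p u)).
  apply: ler_sum => w _; apply: ler_sum => u _.
  rewrite /F /b; case: (boolP (injectiveb w && injectiveb u)) => [/andP [iw iu]|nb].
    rewrite (tinv w u iw iu) /nI iw iu /= le_eqVlt; apply/orP; left; apply/eqP; ring.
  rewrite andbC (negbTE nb) /= !mul0r subrr add0r mulrC; apply: ler_wpM2r.
    by apply: mulr_ge0; apply: Pw_ge0.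
  have le1 : t w w - t w u <= 1.
    rewrite lerBlDr; apply: (le_trans (proj2 (tb w w))); rewrite lerDl.
    exact: (proj1 (tb w u)).
  apply: (le_trans le1); rewrite /nI.
  move: nb; rewrite negb_and; case: (injectiveb w); case: (injectiveb u) => //= _.
  - by rewrite add0r.
  - by rewrite addr0.
  - by rewrite -natrD ler1n.
apply: (le_trans h1).
have e1 : \sum_w \sum_u ((F w u - F u w) + (nI w + nI u) * (Pw p w * Pw p u)) =
   \sum_w \sum_u (F w u - F u w) + \sum_w \sum_u (nI w + nI u) * (Pw p w * Pw p u).
  by rewrite -big_split /=; apply: eq_bigr => w _; rewrite -big_split.
have e2 : \sum_w \sum_u (F w u - F u w) = 0.
  transitivity (\sum_w \sum_u F w u - \sum_w \sum_u F u w).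
    by rewrite -sumrB; apply: eq_bigr => w _; rewrite sumrB.
  by rewrite [X in _ - X]exchange_big subrr.
have PS := Pw_sum M dp.
have e3 : \sum_w \sum_u (nI w + nI u) * (Pw p w * Pw p u) =
   \sum_w nI w * Pw p w + \sum_w nI w * Pw p w.
  transitivity (\sum_(w : {ffun 'I_M -> Z}) \sum_(u : {ffun 'I_M -> Z}) nI w * (Pw p w * Pw p u) + \sum_(w : {ffun 'I_M -> Z}) \sum_(u : {ffun 'I_M -> Z}) nI u * (Pw p w * Pw p u)).
    by rewrite -big_split /=; apply: eq_bigr => w _; rewrite -big_split; apply: eq_bigr => u _; rewrite mulrDl.
  congr (_ + _).
    apply: eq_bigr => w _; rewrite -[RHS]mulr1 -PS mulr_sumr.
    by apply: eq_bigr => u _; rewrite mulrA.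
  rewrite exchange_big /=; apply: eq_bigr => u _; rewrite -[RHS]mulr1 -PS mulr_sumr.
  by apply: eq_bigr => w _; ring.
rewrite e1 e2 e3 add0r -mulr_natl mulr2n mulrDl mul1r.
rewrite mulrDl mul1r; apply: lerD; exact: N_bound.
Qed.

Theorem theorem2 (C : numClosedFieldType) (Z : finType) (d M : nat)
  (p : Z -> C) (rho : Z -> 'M[C]_d)
  (E1 : op C (regs M (Z * 'I_d)%type)) :
  is_distribution p ->
  (forall z, is_density (rho z)) ->
  (0 < M)%N ->
  psd E1 -> psd (opsub opid E1) ->
  simulation_free E1 ->
  let rho1M := tens_pow M (cq_state p rho) in
  let rho2M := tens_pow M (cq_state p (fun _ => avg_state p rho)) in
  let E2 := opsub opid E1 in
  let psucc := 2^-1 * optr (opmul E1 rho1M) + 2^-1 * optr (opmul E2 rho2M) in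
  psucc <= 2^-1 + (M%:R) ^+ 2 * \sum_z p z ^+ 2.
Proof.
move=> dp dens _ pE pIE sf; cbv zeta.
rewrite T2c_eq // T1_eq T2_eq.
have Db := @delta_bound C Z M p (tt E1 rho) dp
  (fun w u => tt_bound w u dens pE pIE).
have Dt : forall w u : {ffun 'I_M -> Z}, injectiveb w -> injectiveb u ->
    tt E1 rho w u = tt E1 rho u u.
  move=> w u iw iu; have [tau ht] := inj_perm iu iw.
  exact: (tt_inv rho u sf ht).
have {}Db := Db Dt.
have PS := Pw_sum M dp.
have eD : \sum_w Pw p w * tt E1 rho w w - \sum_w \sum_u Pw p w * Pw p u * tt E1 rho w u
   = \sum_w \sum_u Pw p w * Pw p u * (tt E1 rho w w - tt E1 rho w u).
  rewrite -sumrB; apply: eq_bigr => w _.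
  rewrite -[X in X - _]mulr1 -PS mulr_sumr -sumrB; apply: eq_bigr => u _; ring.
set T1 := \sum_w Pw p w * tt E1 rho w w.
set T2 := \sum_w \sum_u Pw p w * Pw p u * tt E1 rho w u.
have -> : 2^-1 * T1 + 2^-1 * (1 - T2) = 2^-1 + 2^-1 * (T1 - T2) :> C.
  by ring.
rewrite lerD2l eD.
have h2 : (0 : C) <= 2^-1 by rewrite invr_ge0 ler0n.
apply: (le_trans (ler_wpM2l h2 Db)).
by rewrite le_eqVlt; apply/orP; left; apply/eqP; field.
Qed.
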